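(* Let $\mathcal{R}$ be a cell space whose stabiliser $G_0$ is finite, and let $(F_i)_{i\in I}$ be a net, indexed by a directed set $(I,\leq)$, of nonempty finite subsets of $M$. Then $(F_i)_{i\in I}$ is a right Følner net in $\mathcal{R}$ if and only if for every finite subset $E\subseteq G/G_0$ we have $\lim_{i\in I}\frac{|\partial_E F_i|}{|F_i|}=0$.
   Context: A cell space $\mathcal{R}$ consists of a group $G$ acting transitively on the left on a nonempty set $M$ via $\triangleright$, a point $m_0\in M$ and a family $(g_{m_0,m})_{m\in M}$ in $G$ with $g_{m_0,m}\triangleright m_0=m$. $G_0$ is the stabiliser of $m_0$, $G/G_0$ the set of left cosets. The right semi-action $\triangleleft\colon M\times G/G_0\to M$ is $m\triangleleft gG_0=g_{m_0,m}g\triangleright m_0$; for $E\subseteq G/G_0$, $m\triangleleft E=\{m\triangleleft e:e\in E\}$, and $(\cdot\triangleleft\mathfrak{g})^{-1}(A)=\{m\in M: m\triangleleft\mathfrak{g}\in A\}$. For $A\subseteq M$ and $E\subseteq G/G_0$: $A^{-E}=\{m\in M: m\triangleleft E\subseteq A\}$, $A^{+E}=\{m\in M:(m\triangleleft E)\cap A\neq\emptyset\}$, $\partial_E A=A^{+E}\setminus A^{-E}$. A right Følner net in $\mathcal{R}$ is a net $(F_i)_{i\in I}$ of nonempty finite subsets of $M$ such that for every $\mathfrak{g}\in G/G_0$, $\lim_{i\in I}\frac{|F_i\setminus(\cdot\triangleleft\mathfrak{g})^{-1}(F_i)|}{|F_i|}=0$. *)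

(* Defs.v *)
From mathcomp Require Import all_boot.
From mathcomp Require Import finmap boolp classical_sets cardinality.
From Stdlib Require Import Reals.

Set Implicit Arguments.
Unset Strict Implicit.
Unset Printing Implicit Defensive.

Local Open Scope classical_set_scope.
Local Open Scope fset_scope.

Record cell_space := CellSpace {
  cs_G : Type;
  cs_mul : cs_G -> cs_G -> cs_G;
  cs_one : cs_G;
  cs_inv : cs_G -> cs_G;
  cs_mulA : forall x y z, cs_mul x (cs_mul y z) = cs_mul (cs_mul x y) z;
  cs_mul1g : forall x, cs_mul cs_one x = x;
  cs_mulVg : forall x, cs_mul (cs_inv x) x = cs_one;
  cs_M : choiceType;
  cs_act : cs_G -> cs_M -> cs_M;
  cs_act1 : forall m, cs_act cs_one m = m;
  cs_actM : forall g h m, cs_act (cs_mul g h) m = cs_act g (cs_act h m);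
  cs_transitive : forall m m', exists g, cs_act g m = m';
  cs_m0 : cs_M;
  cs_gm : cs_M -> cs_G;
  cs_gmP : forall m, cs_act (cs_gm m) cs_m0 = m
}.

Section CellSpaceDefs.
Variable R : cell_space.
Local Notation G := (cs_G R).
Local Notation M := (cs_M R).

Definition stabiliser : set G := [set g | cs_act g (cs_m0 R) = cs_m0 R].

Definition lcoset (g : G) : set G :=
  [set x | exists2 h, stabiliser h & x = cs_mul g h].

Definition cosets : Type := {C : set G | exists g, C = lcoset g}.

Definition coset_rep (C : cosets) : G := projT1 (cid (proj2_sig C)).

(* Right semi-action m <| g G_0 = g_{m0,m} g |> m0. *)
Definition semi_act (m : M) (C : cosets) : M :=
  cs_act (cs_mul (cs_gm m) (coset_rep C)) (cs_m0 R).

Definition semi_preimage (C : cosets) (A : set M) : set M :=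
  [set m | A (semi_act m C)].

Definition erosion (A : set M) (E : set cosets) : set M :=
  [set m | forall e, E e -> A (semi_act m e)].
Definition dilation (A : set M) (E : set cosets) : set M :=
  [set m | exists2 e, E e & A (semi_act m e)].
Definition boundary (E : set cosets) (A : set M) : set M :=
  dilation A E `\` erosion A E.

Definition scard (A : set M) : nat := #|` fset_set A|.

End CellSpaceDefs.

Definition net_lim0 (I : Type) (le : I -> I -> Prop) (x : I -> R) : Prop :=
  forall eps : R, (0 < eps)%R -> exists i0, forall i, le i0 i -> (Rabs (x i) < eps)%R.

Definition directed_set (I : Type) (le : I -> I -> Prop) : Prop :=
  inhabited I /\ (forall i, le i i) /\
  (forall i j k, le i j -> le j k -> le i k) /\
  (forall i j, exists k, le i k /\ le j k).

Definition right_folner_net (R : cell_space) (I : Type) (le : I -> I -> Prop)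
  (F : I -> set (cs_M R)) : Prop :=
  (forall i, finite_set (F i) /\ F i !=set0) /\
  forall g : cosets R,
    net_lim0 le (fun i => (INR (scard (F i `\` semi_preimage g (F i)))
                           / INR (scard (F i)))%R).

(* Main.v *)
Require Import Defs.
From mathcomp Require Import all_boot.
From mathcomp Require Import finmap boolp classical_sets cardinality.
From Stdlib Require Import Reals Lra.
From Stdlib Require List.
Local Open Scope classical_set_scope.
Set Implicit Arguments.
Unset Strict Implicit.

Lemma scard_sub (T : choiceType) (A B : set T) : A `<=` B -> finite_set B ->
  (#|` fset_set A| <= #|` fset_set B|)%N.
Proof.
move=> AB fB; have fA := sub_finite_set AB fB.
apply: fsubset_leq_card; by rewrite -fset_set_sub.
Qed.

Lemma scard_U (T : choiceType) (A B : set T) : finite_set A -> finite_set B ->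
  (#|` fset_set (A `|` B)| <= #|` fset_set A| + #|` fset_set B|)%N.
Proof.
move=> fA fB; rewrite fset_setU //; rewrite cardfsU; exact: leq_subr.
Qed.

Lemma scard_img (T : choiceType) (f : T -> T) (A : set T) : finite_set A ->
  (#|` fset_set (f @` A)| <= #|` fset_set A|)%N.
Proof.
move=> fA; rewrite fset_set_image //; exact: leq_imfset_card.
Qed.

Lemma mem_In (U : eqType) (x : U) (s : seq U) : x \in s -> List.In x s.
Proof.
elim: s => [|a s IH]; first by [].
rewrite in_cons => /orP [/eqP ->|/IH]; simpl; tauto.
Qed.

Lemma fin_list T (A : set T) : finite_set A -> exists l : seq T, forall x, A x -> List.In x l.
Proof.
move=> /(@finite_fsetP {classic T}) [X ->]; exists (X : seq {classic T}) => x /= Xx.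
exact: (@mem_In {classic T} x X Xx).
Qed.

Definition UL (X T : Type) (l : list X) (P : X -> set T) : set T :=
  [set m | exists k, List.In k l /\ P k m].
Definition sumL (X : Type) (f : X -> nat) (l : list X) : nat :=
  foldr (fun k acc => (f k + acc)%N) 0%N l.
Definition sumR (X : Type) (f : X -> R) (l : list X) : R :=
  foldr (fun k acc => (f k + acc)%R) 0%R l.

Lemma UL_card (X : Type) (T : choiceType) (l : list X) (P : X -> set T) :
 (forall k, List.In k l -> finite_set (P k)) ->
 finite_set (UL l P) /\
 (#|` fset_set (UL l P)| <= sumL (fun k => #|` fset_set (P k)|) l)%N.
Proof.
elim: l => [|a l IH] H.
  have -> : UL [::] P = set0 by apply/seteqP; split=> x // [k []].
  by rewrite fset_set0; split => //; exact: finite_set0.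
have -> : UL (a :: l) P = P a `|` UL l P.
  apply/seteqP; split=> x /=.
    by move=> [k [[<-|kl] Pk]]; [left|right; exists k].
  by move=> [Pa|[k [kl Pk]]]; [exists a; split; [left|]|exists k; split; [right|]].
have fa : finite_set (P a) by apply: H; left.
have [fl cl] : finite_set (UL l P) /\
 (#|` fset_set (UL l P)| <= sumL (fun k => #|` fset_set (P k)|) l)%N.
  by apply: IH => k kl; apply: H; right.
split; first by rewrite finite_setU; split.
apply: leq_trans (scard_U fa fl) _ => /=.
by rewrite leq_add2l.
Qed.

Lemma lim_le (I : Type) (le : I -> I -> Prop) (x y : I -> R) :
  (forall i, 0 <= x i <= y i)%R -> net_lim0 le y -> net_lim0 le x.
Proof.
move=> H Hy eps He; have [i0 Hi0] := Hy eps He; exists i0 => i /Hi0.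
move=> Hyi; have [h1 h2] := H i; rewrite Rabs_pos_eq //.
apply: Rle_lt_trans h2 _; exact: Rle_lt_trans (Rle_abs _) Hyi.
Qed.

Lemma lim_sumR (I : Type) (le : I -> I -> Prop) (HI : directed_set le)
  (X : Type) (l : list X) (y : X -> I -> R) :
  (forall k, List.In k l -> net_lim0 le (y k)) ->
  net_lim0 le (fun i => sumR (fun k => y k i) l).
Proof.
case: HI => [[i00] [Hr [Ht Hd]]].
elim: l => [|a l IH] H eps He /=.
  by exists i00 => i _; rewrite Rabs_R0.
have [i1 H1] : exists i1, forall i, le i1 i -> (Rabs (y a i) < eps / 2)%R.
  by apply: (H a); [left|lra].
have [i2 H2] : exists i2, forall i, le i2 i ->
   (Rabs (sumR (fun k => y k i) l) < eps / 2)%R.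
  by apply: IH; [move=> k kl; apply: H; right|lra].
have [k [k1 k2]] := Hd i1 i2.
exists k => i ki.
have := H1 i (Ht _ _ _ k1 ki); have := H2 i (Ht _ _ _ k2 ki).
have := Rabs_triang (y a i) (sumR (fun k => y k i) l).
rewrite /sumR /=; lra.
Qed.

Lemma sum_div (X : Type) (f : X -> nat) (l : list X) (c : R) :
  (INR (sumL f l) / c)%R = sumR (fun k => INR (f k) / c)%R l.
Proof.
elim: l => [|a l IH] /=; first by rewrite /Rdiv Rmult_0_l.
by rewrite /sumL /= plus_INR /Rdiv Rmult_plus_distr_r -IH.
Qed.

Lemma div_le (a b c : nat) : (a <= b)%N -> (INR a / INR c <= INR b / INR c)%R.
Proof.
move=> /leP ab; apply: Rmult_le_compat_r; last exact: le_INR.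
case: c => [|c]; first by rewrite Rinv_0; lra.
apply/Rlt_le/Rinv_0_lt_compat/lt_0_INR; apply/leP => //.
Qed.

Lemma div_ge0 (a c : nat) : (0 <= INR a / INR c)%R.
Proof.
have := @div_le 0 a c (leq0n a); rewrite /Rdiv Rmult_0_l; lra.
Qed.

Lemma mulgV (R : cell_space) (x : cs_G R) : cs_mul x (cs_inv x) = cs_one R.
Proof.
set y := cs_inv x.
rewrite -[cs_mul x y](cs_mul1g) -(cs_mulVg y) -cs_mulA (cs_mulA y x y).
by rewrite /y (cs_mulVg x) cs_mul1g cs_mulVg.
Qed.

Lemma mulg1 (R : cell_space) (x : cs_G R) : cs_mul x (cs_one R) = x.
Proof. by rewrite -(cs_mulVg x) cs_mulA mulgV cs_mul1g. Qed.

Definition mkc (R : cell_space) (g : cs_G R) : cosets R :=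
  exist _ (lcoset g) (ex_intro _ g erefl).

Lemma rep_spec (R : cell_space) (C : cosets R) : proj1_sig C = lcoset (coset_rep C).
Proof. by rewrite /coset_rep; case: cid. Qed.

Lemma semi_act_mk (R : cell_space) (m : cs_M R) (g : cs_G R) :
  semi_act m (mkc g) = cs_act (cs_mul (cs_gm m) g) (cs_m0 R).
Proof.
have := rep_spec (mkc g); rewrite /= => E.
have : lcoset (coset_rep (mkc g)) (coset_rep (mkc g)).
  exists (cs_one R); [exact: cs_act1 | by rewrite mulg1].
rewrite -E => -[h Sh Eh].
by rewrite /semi_act Eh cs_mulA cs_actM Sh.
Qed.

Definition cK (R : cell_space) (k : cosets R * cosets R * cs_G R) : cosets R :=
  mkc (cs_mul k.2 (cs_mul (cs_inv (coset_rep k.1.1)) (coset_rep k.1.2))).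

Definition psi (R : cell_space) (k : cosets R * cosets R * cs_G R) (x : cs_M R) : cs_M R :=
  cs_act (cs_mul (cs_gm x) (cs_mul k.2 (cs_inv (coset_rep k.1.1)))) (cs_m0 R).

Definition Pk (R : cell_space) (F : set (cs_M R)) (k : cosets R * cosets R * cs_G R) :=
  psi k @` (F `\` semi_preimage (cK k) F).

Definition L3 (R : cell_space) (le : list (cosets R)) (ls : list (cs_G R)) :=
  List.flat_map (fun e => List.flat_map (fun e' => List.map (fun s => (e, e', s)) ls) le) le.

Lemma cover (R : cell_space) (E : set (cosets R)) (le : list (cosets R))
  (ls : list (cs_G R)) (F : set (cs_M R)) :
  (forall e, E e -> List.In e le) -> (forall s, stabiliser s -> List.In s ls) ->
  boundary E F `<=` UL (L3 le ls) (Pk F).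
Proof.
move=> Hle Hls m [[e Ee Fe] Hnot].
have [e' [Ee' nF]] : exists e', E e' /\ ~ F (semi_act m e').
  apply: contrapT => H; apply: Hnot => e1 Ee1; apply: contrapT => nF1.
  by apply: H; exists e1.
set x := semi_act m e.
set gm := cs_gm m; set gx := cs_gm x; set ge := coset_rep e; set ge' := coset_rep e'.
set s := cs_mul (cs_inv gx) (cs_mul gm ge).
have Ss : stabiliser s.
  have xE : cs_act (cs_mul gm ge) (cs_m0 R) = x by [].
  rewrite /stabiliser /s /= cs_actM xE -{1}(cs_gmP x).
  by rewrite -cs_actM cs_mulVg cs_act1.
have gxs : cs_mul gx s = cs_mul gm ge by rewrite /s cs_mulA mulgV cs_mul1g.
exists (e, e', s); split.
  rewrite /L3; apply/List.in_flat_map; exists e; split; first exact: Hle.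
  apply/List.in_flat_map; exists e'; split; first exact: Hle.
  by apply/List.in_map_iff; exists s; split => //; exact: Hls.
exists x; last first.
  rewrite /psi /= -/gx cs_mulA gxs -cs_mulA mulgV mulg1; exact: cs_gmP.
split => //; rewrite /semi_preimage /cK /= semi_act_mk -/gx.
rewrite cs_mulA gxs -cs_mulA (cs_mulA ge) mulgV cs_mul1g; exact: nF.
Qed.

Lemma sumL_mono (X : Type) (f g : X -> nat) (l : list X) :
  (forall k, List.In k l -> (f k <= g k)%N) -> (sumL f l <= sumL g l)%N.
Proof.
elim: l => [|a l IH] H //=; rewrite /sumL /=.
apply: leq_add; first by apply: H; left.
by apply: IH => k kl; apply: H; right.
Qed.

Lemma bnd (R : cell_space) (HG0 : finite_set (@stabiliser R))
  (E : set (cosets R)) : finite_set E ->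
  exists l3, forall F : set (cs_M R), finite_set F ->
    finite_set (boundary E F) /\
    (scard (boundary E F) <= sumL (fun k => scard (F `\` semi_preimage (cK k) F)) l3)%N.
Proof.
move=> fE; have [le Hle] := fin_list fE; have [ls Hls] := fin_list HG0.
exists (L3 le ls) => F fF.
have [fU cU] := @UL_card _ _ (L3 le ls) (Pk F)
  (fun k _ => finite_image (psi k) (finite_setD _ fF)).
have sub := @cover R E le ls F Hle Hls.
split; first exact: sub_finite_set sub fU.
apply: leq_trans (scard_sub sub fU) _.
apply: leq_trans cU _; apply: sumL_mono => k _.
exact: scard_img (finite_setD _ fF).
Qed.

Unset Implicit Arguments.
Set Strict Implicit.

Theorem theorem1 (R : cell_space) (HG0 : finite_set (@stabiliser R))
  (I : Type) (le : I -> I -> Prop) (HI : directed_set le)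
  (F : I -> set (cs_M R))
  (HF : forall i, finite_set (F i) /\ F i !=set0) :
  right_folner_net le F <->
  (forall E : set (cosets R), finite_set E ->
     net_lim0 le (fun i => (INR (scard (boundary E (F i))) / INR (scard (F i)))%R)).
Proof.
split.
  move=> [_ Hlim] E fE; have [l3 Hl3] := bnd HG0 fE.
  apply: (@lim_le _ _ _ (fun i => sumR (fun k =>
     (INR (scard (F i `\` semi_preimage (cK k) (F i))) / INR (scard (F i)))%R) l3)).
    move=> i; split; first exact: div_ge0.
    rewrite -sum_div; apply: div_le; exact: (Hl3 _ (HF i).1).2.
  apply: lim_sumR => // k _; exact: Hlim.
move=> H; split => // g.
pose E : set (cosets R) := [set mkc (cs_one R); g].
apply: (lim_le (y := fun i => (INR (scard (boundary E (F i))) / INR (scard (F i)))%R));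
  last by apply: H; exact: finite_set2.
move=> i; split; first exact: div_ge0.
have [l3 Hl3] := bnd HG0 (finite_set2 (mkc (cs_one R)) g).
have [fB _] := Hl3 _ (HF i).1.
apply: div_le; apply: scard_sub fB => m [Fm nF]; split.
  exists (mkc (cs_one R)); first by left.
  by rewrite semi_act_mk mulg1 cs_gmP.
by move=> Her; apply: nF; apply: Her; right.
Qed.
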